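(* Let $K$ be a field of characteristic $\neq 2$, $n\ge1$, and let $\mathcal C$ be any EACP over $K$. Then $\mathcal C$ is not unital, i.e. there is no $e\in\mathcal C$ with $ex=x=xe$ for all $x\in\mathcal C$.
   Context: An EACP over a field $K$ (characteristic $\neq 2$) is a $K$-algebra $\mathcal C$ with a basis $\{h_1,\dots,h_n,r\}$ (called a natural basis) whose multiplication is determined by bilinearity from $$h_ir=rh_i=\tfrac12\Big(\sum_{j=1}^n a_{ij}h_j+b_ir\Big),\qquad h_ih_j=0\ (i,j=1,\dots,n),\qquad rr=0,$$ for some constants $a_{ij},b_i\in K$. *)

(* Defs.v *)
From HB Require Import structures.
From mathcomp Require Import all_boot all_order all_algebra.
Set Implicit Arguments. Unset Strict Implicit. Unset Printing Implicit Defensive.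
Import GRing.Theory.
Local Open Scope ring_scope.

Definition bilinear_mul (K : fieldType) (V : vectType K) (mul : V -> V -> V) :=
  (forall (c : K) (x y z : V), mul (c *: x + y) z = c *: mul x z + mul y z) /\
  (forall (c : K) (x y z : V), mul z (c *: x + y) = c *: mul z x + mul z y).

Definition natural_basis (K : fieldType) (V : vectType K) (n : nat)
    (h : 'I_n -> V) (r : V) : seq V :=
  rcons [seq h i | i <- enum 'I_n] r.

Definition is_EACP (K : fieldType) (V : vectType K) (n : nat)
    (mul : V -> V -> V) (h : 'I_n -> V) (r : V)
    (a : 'I_n -> 'I_n -> K) (b : 'I_n -> K) : Prop :=
  [/\ bilinear_mul mul,
      basis_of fullv (natural_basis h r),
      (forall i, mul (h i) r = 2^-1 *: (\sum_j a i j *: h j + b i *: r)) /\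
      (forall i, mul r (h i) = 2^-1 *: (\sum_j a i j *: h j + b i *: r)),
      (forall i j, mul (h i) (h j) = 0) &
      mul r r = 0].

(* Main.v *)
Require Import Defs.
From HB Require Import structures.
From mathcomp Require Import all_boot all_order all_algebra.
Import GRing.Theory.
Local Open Scope ring_scope.

Lemma span_closed_mul (K : fieldType) (V : vectType K) (mul : V -> V -> V)
  (X : seq V) (W : {vspace V}) (z : V) :
  bilinear_mul mul -> (forall x, x \in X -> mul x z \in W) ->
  forall w, w \in <<X>>%VS -> mul w z \in W.
Proof.
move=> [Hl _] HX w Hw.
have H0 : mul 0 z = 0.
  have := Hl 1 0 0 z; rewrite !scale1r addr0 => E.
  by apply: (addrI (mul 0 z)); rewrite addr0 -E.
have HD : forall x y, mul (x + y) z = mul x z + mul y z.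
  by move=> x y; have := Hl 1 x y z; rewrite !scale1r.
have HZ : forall c x, mul (c *: x) z = c *: mul x z.
  by move=> c x; have := Hl c x 0 z; rewrite !addr0 H0 addr0.
pose T := in_tuple X.
have := coord_span (X := T) Hw => ->.
rewrite (big_morph (fun x => mul x z) HD H0).
apply: memv_suml => i _; rewrite HZ; apply: memvZ; apply: HX.
exact: mem_nth.
Qed.

Theorem mainTheorem5 (K : fieldType) (V : vectType K) (n : nat)
    (mul : V -> V -> V) (h : 'I_n -> V) (r : V)
    (a : 'I_n -> 'I_n -> K) (b : 'I_n -> K) :
  (2%:R : K) != 0 -> (1 <= n)%N -> is_EACP mul h r a b ->
  ~ (exists e : V, forall x : V, mul e x = x /\ mul x e = x).
Proof.
move=> _ _ [Hbil Hbas [Hhr Hrh] Hhh Hrr] [e He].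
have [Hl Hr] := Hbil.
set S := [seq h i | i <- enum 'I_n].
have Hbas' : basis_of fullv (r :: S).
  rewrite -(perm_basis _ (_ : perm_eq (rcons S r) _)) //; by rewrite perm_rcons perm_refl.
have /andP [Hnot _] : (r \notin <<S>>%VS) && free S by rewrite -free_cons; exact: (basis_free Hbas').
move/negP: Hnot; apply.
have : e \in <<r :: S>>%VS by rewrite (span_basis Hbas') memvf.
rewrite span_cons => /memv_addP [u /vlineP [d ->] [w0 Hw0 Ee]].
have Hz0 : forall z, mul z 0 = 0.
  move=> z; have := Hr 1 0 0 z; rewrite !scale1r addr0 => E.
  by apply: (addrI (mul z 0)); rewrite addr0 -E.
have H0z : forall z, mul 0 z = 0.
  move=> z; have := Hl 1 0 0 z; rewrite !scale1r addr0 => E.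
  by apply: (addrI (mul 0 z)); rewrite addr0 -E.
have Hwh : forall i, mul w0 (h i) \in (0%VS : {vspace V}).
  move=> i; apply: (@span_closed_mul _ _ _ _ _ _ Hbil _ _ Hw0) => x /mapP [j _ ->].
  by rewrite Hhh mem0v.
have Hrhi : forall i, mul r (h i) \in <<S>>%VS.
  move=> i.
  have := (He (h i)).1; rewrite Ee Hl.
  move: (Hwh i); rewrite memv0 => /eqP ->; rewrite addr0 => E.
  have [d0|dn0] := eqVneq d 0.
    move: E; rewrite d0 scale0r => <-; by rewrite Hz0 mem0v.
  have -> : mul r (h i) = d^-1 *: h i by rewrite -{2}E scalerA mulVf // scale1r.
  by apply: memvZ; apply: memv_span; apply: map_f; rewrite mem_enum.
have <- : mul e r = r by have := He r => [[]].
rewrite Ee Hl Hrr scaler0 add0r.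
apply: (@span_closed_mul _ _ _ _ _ _ Hbil _ _ Hw0) => x /mapP [j _ ->].
by rewrite Hhr -Hrh.
Qed.
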